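(* For all $t,n\in\mathbb N$ we have $d(0,n)=0$ and \begin{align*} &d(4t,4n)=d(2t,2n),\quad d(4t,4n+1)=d(2t,2n),\quad d(4t,4n+2)=d(2t,2n+1),\quad d(4t,4n+3)=d(2t,2n+1),\\ &d(4t+1,4n)=d(2t,2n),\quad d(4t+1,4n+1)=d(2t+1,2n),\quad d(4t+1,4n+2)=d(2t,2n+1)+1,\quad d(4t+1,4n+3)=d(2t+1,2n+1)-1,\\ &d(4t+2,4n)=d(2t+1,2n),\quad d(4t+2,4n+1)=d(2t+1,2n)+1,\quad d(4t+2,4n+2)=d(2t+1,2n+1),\quad d(4t+2,4n+3)=d(2t+1,2n+1)-1,\\ &d(4t+3,4n)=d(2t+1,2n)+1,\quad d(4t+3,4n+1)=d(2t+2,2n),\quad d(4t+3,4n+2)=d(2t+1,2n+1),\quad d(4t+3,4n+3)=d(2t+2,2n+1)-1. \end{align*}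
   Context: For $n\in\mathbb N=\{0,1,2,\dots\}$ with binary digits $\delta_j(n)\in\{0,1\}$ ($n=\sum_j\delta_j(n)2^j$), let $\mathsf r(n)=\#\{j\ge0:\delta_{j+1}(n)=\delta_j(n)=1\}$, the number of (overlapping) occurrences of the block $\mathtt{11}$ in the binary expansion of $n$. Let $d(t,n)=\mathsf r(n+t)-\mathsf r(n)$. *)

(* Defs.v *)
From mathcomp Require Import all_boot all_order all_algebra.
Set Implicit Arguments. Unset Strict Implicit. Unset Printing Implicit Defensive.
Import GRing.Theory Num.Theory.

Definition bdigit (j n : nat) : bool := odd (n %/ 2 ^ j).

(* r(n) = #{ j >= 0 : delta_{j+1}(n) = delta_j(n) = 1 }.
   All digits with index j >= n vanish (2^j > n), so summing over j < n
   counts every occurrence. *)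
Definition r (n : nat) : nat := \sum_(j < n) (bdigit j.+1 n && bdigit j n).

Definition d (t n : nat) : int := (r (n + t))%:Z - (r n)%:Z.

(* Main.v *)
Require Import Defs.
From mathcomp Require Import all_boot all_order all_algebra.
From mathcomp Require Import zify.
Import GRing.Theory Num.Theory.
Local Open Scope ring_scope.

Lemma rK (n K : nat) : (n <= K)%N ->
  r n = (\sum_(j < K) (bdigit j.+1 n && bdigit j n))%N.
Proof.
move=> H; rewrite /r -!(big_mkord xpredT (fun j => (bdigit j.+1 n && bdigit j n) : nat)).
rewrite [RHS](big_cat_nat (n:=n)) //= [X in _ = (_ + X)%N]big_nat_cond [X in _ = (_ + X)%N]big1 ?addn0 //.
move=> j /andP[/andP[Hn _] _].
suff -> : bdigit j n = false by rewrite andbF.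
rewrite /bdigit divn_small //.
apply: leq_trans (ltn_expl n (ltnSn 1)) _.
by rewrite leq_pexp2l.
Qed.

Lemma h2 (m : nat) (b : bool) : ((2 * m + b) %/ 2 = m)%N.
Proof. by rewrite mulnC divnMDl // divn_small ?addn0 //; case: b. Qed.

Lemma bdS (m : nat) (b : bool) j : bdigit j.+1 (2* m + b) = bdigit j m.
Proof.
rewrite /bdigit expnS divnMA; congr (odd (_ %/ _)).
exact: h2.
Qed.

Lemma bd0 (m : nat) (b : bool) : bdigit 0 (2* m + b) = b.
Proof. by rewrite /bdigit expn0 divn1 oddD oddM /=; case: b. Qed.

Lemma r2 (m : nat) (b : bool) : r (2* m + b) = (r m + (b && odd m))%N.
Proof.
rewrite (@rK (2* m+b) (2* m+b).+1) // big_ord_recl /=.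
rewrite (@rK m (2* m+b)); last lia.
rewrite addnC; congr (_ + _)%N.
  by apply: eq_bigr => i _; rewrite /bump /= !add1n bdS bdS.
rewrite bd0 /bdigit expn1.
rewrite h2.
by rewrite andbC.
Qed.

Lemma r2E x (X : nat) (b : bool) : x = (2*X + b)%N -> r x = (r X + (b && odd X))%N.
Proof. by move=> ->; rewrite r2. Qed.

Lemma r4E x (X : nat) (a b : bool) : x = (4*X + 2*a + b)%N ->
  r x = (r X + (a && odd X) + (b && a))%N.
Proof.
move=> ->; rewrite (_ : (4*X + 2*a)%N = (2*(2*X+a))%N); last lia.
by rewrite r2 r2 oddD oddM /=; case: a.
Qed.

Theorem lemma3p1 : forall t n : nat,
  d 0 n = 0 /\
  d (4*t) (4*n) = d (2*t) (2*n) /\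
  d (4*t) (4*n+1) = d (2*t) (2*n) /\
  d (4*t) (4*n+2) = d (2*t) (2*n+1) /\
  d (4*t) (4*n+3) = d (2*t) (2*n+1) /\
  d (4*t+1) (4*n) = d (2*t) (2*n) /\
  d (4*t+1) (4*n+1) = d (2*t+1) (2*n) /\
  d (4*t+1) (4*n+2) = d (2*t) (2*n+1) + 1 /\
  d (4*t+1) (4*n+3) = d (2*t+1) (2*n+1) - 1 /\
  d (4*t+2) (4*n) = d (2*t+1) (2*n) /\
  d (4*t+2) (4*n+1) = d (2*t+1) (2*n) + 1 /\
  d (4*t+2) (4*n+2) = d (2*t+1) (2*n+1) /\
  d (4*t+2) (4*n+3) = d (2*t+1) (2*n+1) - 1 /\
  d (4*t+3) (4*n) = d (2*t+1) (2*n) + 1 /\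
  d (4*t+3) (4*n+1) = d (2*t+2) (2*n) /\
  d (4*t+3) (4*n+2) = d (2*t+1) (2*n+1) /\
  d (4*t+3) (4*n+3) = d (2*t+2) (2*n+1) - 1.
Proof.
move=> t n.
split; first by rewrite /d addn0 subrr.
split.
{ rewrite /d. rewrite (@r4E (4*n + (4*t)) (n+t) false false ltac:(simpl; lia)). rewrite (@r4E (4*n) n false false ltac:(simpl; lia)). rewrite (@r2E (2*n + (2*t)) (n+t) false ltac:(simpl; lia)). rewrite (@r2E (2*n) n false ltac:(simpl; lia)). simpl; lia. }
split.
{ rewrite /d. rewrite (@r4E (4*n+1 + (4*t)) (n+t) false true ltac:(simpl; lia)). rewrite (@r4E (4*n+1) n false true ltac:(simpl; lia)). rewrite (@r2E (2*n + (2*t)) (n+t) false ltac:(simpl; lia)). rewrite (@r2E (2*n) n false ltac:(simpl; lia)). simpl; lia. }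
split.
{ rewrite /d. rewrite (@r4E (4*n+2 + (4*t)) (n+t) true false ltac:(simpl; lia)). rewrite (@r4E (4*n+2) n true false ltac:(simpl; lia)). rewrite (@r2E (2*n+1 + (2*t)) (n+t) true ltac:(simpl; lia)). rewrite (@r2E (2*n+1) n true ltac:(simpl; lia)). simpl; lia. }
split.
{ rewrite /d. rewrite (@r4E (4*n+3 + (4*t)) (n+t) true true ltac:(simpl; lia)). rewrite (@r4E (4*n+3) n true true ltac:(simpl; lia)). rewrite (@r2E (2*n+1 + (2*t)) (n+t) true ltac:(simpl; lia)). rewrite (@r2E (2*n+1) n true ltac:(simpl; lia)). simpl; lia. }
split.
{ rewrite /d. rewrite (@r4E (4*n + (4*t+1)) (n+t) false true ltac:(simpl; lia)). rewrite (@r4E (4*n) n false false ltac:(simpl; lia)). rewrite (@r2E (2*n + (2*t)) (n+t) false ltac:(simpl; lia)). rewrite (@r2E (2*n) n false ltac:(simpl; lia)). simpl; lia. }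
split.
{ rewrite /d. rewrite (@r4E (4*n+1 + (4*t+1)) (n+t) true false ltac:(simpl; lia)). rewrite (@r4E (4*n+1) n false true ltac:(simpl; lia)). rewrite (@r2E (2*n + (2*t+1)) (n+t) true ltac:(simpl; lia)). rewrite (@r2E (2*n) n false ltac:(simpl; lia)). simpl; lia. }
split.
{ rewrite /d. rewrite (@r4E (4*n+2 + (4*t+1)) (n+t) true true ltac:(simpl; lia)). rewrite (@r4E (4*n+2) n true false ltac:(simpl; lia)). rewrite (@r2E (2*n+1 + (2*t)) (n+t) true ltac:(simpl; lia)). rewrite (@r2E (2*n+1) n true ltac:(simpl; lia)). simpl; lia. }
split.
{ rewrite /d. rewrite (@r4E (4*n+3 + (4*t+1)) ((n+t)+1) false false ltac:(simpl; lia)). rewrite (@r4E (4*n+3) n true true ltac:(simpl; lia)). rewrite (@r2E (2*n+1 + (2*t+1)) ((n+t)+1) false ltac:(simpl; lia)). rewrite (@r2E (2*n+1) n true ltac:(simpl; lia)). simpl; lia. }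
split.
{ rewrite /d. rewrite (@r4E (4*n + (4*t+2)) (n+t) true false ltac:(simpl; lia)). rewrite (@r4E (4*n) n false false ltac:(simpl; lia)). rewrite (@r2E (2*n + (2*t+1)) (n+t) true ltac:(simpl; lia)). rewrite (@r2E (2*n) n false ltac:(simpl; lia)). simpl; lia. }
split.
{ rewrite /d. rewrite (@r4E (4*n+1 + (4*t+2)) (n+t) true true ltac:(simpl; lia)). rewrite (@r4E (4*n+1) n false true ltac:(simpl; lia)). rewrite (@r2E (2*n + (2*t+1)) (n+t) true ltac:(simpl; lia)). rewrite (@r2E (2*n) n false ltac:(simpl; lia)). simpl; lia. }
split.
{ rewrite /d. rewrite (@r4E (4*n+2 + (4*t+2)) ((n+t)+1) false false ltac:(simpl; lia)). rewrite (@r4E (4*n+2) n true false ltac:(simpl; lia)). rewrite (@r2E (2*n+1 + (2*t+1)) ((n+t)+1) false ltac:(simpl; lia)). rewrite (@r2E (2*n+1) n true ltac:(simpl; lia)). simpl; lia. }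
split.
{ rewrite /d. rewrite (@r4E (4*n+3 + (4*t+2)) ((n+t)+1) false true ltac:(simpl; lia)). rewrite (@r4E (4*n+3) n true true ltac:(simpl; lia)). rewrite (@r2E (2*n+1 + (2*t+1)) ((n+t)+1) false ltac:(simpl; lia)). rewrite (@r2E (2*n+1) n true ltac:(simpl; lia)). simpl; lia. }
split.
{ rewrite /d. rewrite (@r4E (4*n + (4*t+3)) (n+t) true true ltac:(simpl; lia)). rewrite (@r4E (4*n) n false false ltac:(simpl; lia)). rewrite (@r2E (2*n + (2*t+1)) (n+t) true ltac:(simpl; lia)). rewrite (@r2E (2*n) n false ltac:(simpl; lia)). simpl; lia. }
split.
{ rewrite /d. rewrite (@r4E (4*n+1 + (4*t+3)) ((n+t)+1) false false ltac:(simpl; lia)). rewrite (@r4E (4*n+1) n false true ltac:(simpl; lia)). rewrite (@r2E (2*n + (2*t+2)) ((n+t)+1) false ltac:(simpl; lia)). rewrite (@r2E (2*n) n false ltac:(simpl; lia)). simpl; lia. }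
split.
{ rewrite /d. rewrite (@r4E (4*n+2 + (4*t+3)) ((n+t)+1) false true ltac:(simpl; lia)). rewrite (@r4E (4*n+2) n true false ltac:(simpl; lia)). rewrite (@r2E (2*n+1 + (2*t+1)) ((n+t)+1) false ltac:(simpl; lia)). rewrite (@r2E (2*n+1) n true ltac:(simpl; lia)). simpl; lia. }
{ rewrite /d. rewrite (@r4E (4*n+3 + (4*t+3)) ((n+t)+1) true false ltac:(simpl; lia)). rewrite (@r4E (4*n+3) n true true ltac:(simpl; lia)). rewrite (@r2E (2*n+1 + (2*t+2)) ((n+t)+1) true ltac:(simpl; lia)). rewrite (@r2E (2*n+1) n true ltac:(simpl; lia)). simpl; lia. }
Qed.
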